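(* For every odd $n\geq 5$, there exists a smooth nondegenerate line fibration of $\mathbb R^n$ such that the hyperplane distribution orthogonal to the fibers is not a contact structure.
   Context: A smooth line fibration of $\mathbb R^n$ is given by a smooth unit vector field $V$ on $\mathbb R^n$ all of whose integral curves are straight lines (equivalently $\nabla_V V\equiv 0$); the fibers are these oriented lines. It is nondegenerate if at every point the covariant derivative $\nabla V$ vanishes only in the direction of $V$, i.e. $\nabla_X V=0$ implies $X$ is a multiple of $V$. The orthogonal hyperplane distribution is $V^\perp$, the kernel of the $1$-form dual to $V$; it is a contact structure if this $1$-form $\alpha$ satisfies $\alpha\wedge(d\alpha)^{(n-1)/2}\neq 0$ everywhere. *)

(* Defs.v *)
From HB Require Import structures.
From mathcomp Require Import all_boot all_order all_algebra all_fingroup.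
From mathcomp Require Import all_classical all_reals all_analysis.
Set Implicit Arguments. Unset Strict Implicit. Unset Printing Implicit Defensive.
Import Order.TTheory GRing.Theory Num.Theory.
Import numFieldNormedType.Exports.
Local Open Scope ring_scope.

Section Fibrations.
Variable R : realType.

Definition iterD {U W : normedModType R} (vs : seq U) (f : U -> W) : U -> W :=
  foldr (fun v g => fun x => 'D_v g x) f vs.

Definition smooth {U W : normedModType R} (f : U -> W) : Prop :=
  forall vs : seq U,
    (forall x v, derivable (iterD vs f) x v) /\ continuous (iterD vs f).

Definition e_ {n : nat} (i : 'I_n) : 'rV[R]_n := delta_mx 0 i.

Definition unit_field {n : nat} (V : 'rV[R]_n -> 'rV[R]_n) : Prop :=
  forall x, \sum_(i < n) (V x 0 i) ^+ 2 = 1.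

(* covariant derivative nabla_X V at x (flat connection on R^n) *)
Definition nabla {n : nat} (V : 'rV[R]_n -> 'rV[R]_n) (x X : 'rV[R]_n) : 'rV[R]_n :=
  'D_X V x.

Definition line_fibration {n : nat} (V : 'rV[R]_n -> 'rV[R]_n) : Prop :=
  smooth V /\ unit_field V /\ forall x, nabla V x (V x) = 0.

Definition nondegenerate_fibration {n : nat} (V : 'rV[R]_n -> 'rV[R]_n) : Prop :=
  forall x X, nabla V x X = 0 -> exists c : R, X = c *: V x.

(* alpha = sum_i V_i dx_i ; d alpha (e_i, e_j) = d_i V_j - d_j V_i *)
Definition alpha {n : nat} (V : 'rV[R]_n -> 'rV[R]_n) (x : 'rV[R]_n) (i : 'I_n) : R :=
  V x 0 i.

Definition dalpha {n : nat} (V : 'rV[R]_n -> 'rV[R]_n) (x : 'rV[R]_n) (i j : 'I_n) : R :=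
  nabla V x (e_ i) 0 j - nabla V x (e_ j) 0 i.

(* In dimension n = 2k+1: the value (up to the nonzero normalising constant
   of the alternation) of the top form alpha /\ (d alpha)^k on (e_0,...,e_{n-1}):
   sum over sigma of sgn(sigma) alpha(e_s0) prod_m dalpha(e_s(2m+1), e_s(2m+2)). *)
Definition alpha_wedge_dalpha_pow {k : nat}
    (V : 'rV[R]_(k.*2.+1) -> 'rV[R]_(k.*2.+1)) (x : 'rV[R]_(k.*2.+1)) : R :=
  \sum_(s : 'S_(k.*2.+1))
    (-1) ^+ s * alpha V x (s ord0) *
    \prod_(m < k) dalpha V x (s (inord m.*2.+1)) (s (inord m.*2.+2)).

Definition orth_contact {k : nat} (V : 'rV[R]_(k.*2.+1) -> 'rV[R]_(k.*2.+1)) : Prop :=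
  forall x, alpha_wedge_dalpha_pow V x != 0.

End Fibrations.

(* Main.v *)
Require Import Defs.
From HB Require Import structures.
From mathcomp Require Import all_boot all_order all_algebra all_fingroup.
From mathcomp Require Import all_classical all_reals all_analysis.
From mathcomp Require Import ring lra zify.

Module Dev.
Set Implicit Arguments. Unset Strict Implicit. Unset Printing Implicit Defensive.
Import Order.TTheory GRing.Theory Num.Theory.
Import numFieldNormedType.Exports.
Local Open Scope classical_set_scope.
Local Open Scope ring_scope.

Section CC.
Variable R : realType.
Variable n : nat.
Local Notation U := 'rV[R]_n.

Inductive C : (U -> R) -> Prop :=
| Ccst (c : R) : C (fun _ => c)
| Ccoord (i : 'I_n) : C (fun x => x 0 i)
| Cadd f g : C f -> C g -> C (fun x => f x + g x)
| Cmul f g : C f -> C g -> C (fun x => f x * g x)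
| Cinv f : C f -> (forall x, f x != 0) -> C (fun x => (f x)^-1)
| Csqrt f : C f -> (forall x, 0 < f x) -> C (fun x => Num.sqrt (f x)).

Lemma Cext f g : C f -> (forall x, f x = g x) -> C g.
Proof. by move=> Cf fg; have -> : g = f by apply/funext => x; rewrite fg. Qed.

Lemma is_derive_line (f : U -> R) (x v : U) (L : R) :
  (forall h : R, f (h *: v + x) = f x + h * L) -> is_derive x v f L.
Proof.
move=> H.
have cv : (fun h : R => h^-1 *: ((f \o shift x) (h *: v) - f x)) @ 0^' --> L.
  apply: cvg_near_cst; near=> h.
  rewrite /= H addrAC subrr add0r /GRing.scale /= mulrA mulVf ?mul1r //.
  near: h; exact: nbhs_dnbhs_neq.
apply: DeriveDef; first by apply/cvg_ex; exists L.
exact: cvg_lim cv.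
Unshelve. all: by end_near. Qed.

Lemma derive_coord (i : 'I_n) (x v : U) : is_derive x v (fun y : U => y 0 i) (v 0 i).
Proof.
apply: is_derive_line => h; rewrite !mxE addrC.
by [].
Qed.

Lemma C_diff f : C f -> (forall x, differentiable f x) /\
  forall v, exists g, C g /\ forall x, is_derive x v f (g x).
Proof.
elim=> {f}.
- move=> c; split => [x|v]; first exact: differentiable_cst.
  by exists (fun _ => 0); split => [|x]; [exact: Ccst| exact: is_derive_cst].
- move=> i; split => [x|v]; first exact: differentiable_coord.
  exists (fun _ => v 0 i); split => [|x]; [exact: Ccst|exact: derive_coord].
- move=> f g _ [df Df] _ [dg Dg]; split => [x|v].
    exact: (differentiableD (df x) (dg x)).
  have [f' [Cf' Hf]] := Df v; have [g' [Cg' Hg]] := Dg v.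
  exists (fun x => f' x + g' x); split => [|x]; first exact: Cadd.
  exact: (is_deriveD (Hf x) (Hg x)).
- move=> f g Cf [df Df] Cg [dg Dg]; split => [x|v].
    exact: (differentiableM (df x) (dg x)).
  have [f' [Cf' Hf]] := Df v; have [g' [Cg' Hg]] := Dg v.
  exists (fun x => f x * g' x + g x * f' x); split => [|x].
    by apply: Cadd; apply: Cmul.
  exact: (is_deriveM (Hf x) (Hg x)).
- move=> f Cf [df Df] f0; split => [x|v].
    exact: differentiableV.
  have [f' [Cf' Hf]] := Df v.
  exists (fun x => - (f x ^+ 2)^-1 * f' x); split => [|x].
    apply: Cmul => //; apply: (@Cext (fun x => (f x * f x)^-1 * (-1))).
      by apply: Cmul; [apply: Cinv; [exact: Cmul| move=> x; rewrite mulf_neq0]|exact: Ccst].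
    by move=> x; rewrite mulrN1 expr2.
  have hd := Hf x.
  apply: DeriveDef; first exact: derivableV (f0 x) (@ex_derive _ _ _ _ _ _ _ hd).
  by rewrite deriveV // ?derive_val // (@ex_derive _ _ _ _ _ _ _ hd).
- move=> f Cf [df Df] f0.
  have ds : forall x, differentiable (@Num.sqrt R) (f x).
    move=> x; apply/derivable1_diffP.
    exact: (@ex_derive _ _ _ _ _ _ _ (is_derive1_sqrt (f0 x))).
  split => [x|v].
    exact: (differentiable_comp (df x) (ds x)).
  have [f' [Cf' Hf]] := Df v.
  exists (fun x => f' x * (2 * Num.sqrt (f x))^-1); split => [|x].
    apply: Cmul => //; apply: Cinv; first by apply: Cmul; [exact: Ccst|exact: Csqrt].
    by move=> x; rewrite mulf_neq0 // gt_eqF // sqrtr_gt0.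
  have dc := differentiable_comp (df x) (ds x).
  apply: DeriveDef; first exact: diff_derivable.
  rewrite (deriveE _ dc) diff_comp // deriv1E; last first.
    exact: (@ex_derive _ _ _ _ _ _ _ (is_derive1_sqrt (f0 x))).
  rewrite /= -deriveE // derive_val derive1E derive_sqrt // mulrC /GRing.scale /= mulrC.
Qed.

Definition CV (G : U -> U) := forall j, C (fun x => G x 0 j).

Lemma CV_diff G : CV G -> forall x, differentiable G x.
Proof.
move=> CG x.
have -> : G = \sum_(j < n) (fun x => G x 0 j *: (delta_mx 0 j : U)).
  by rewrite fct_sumE; apply/funext => y; rewrite [LHS]row_sum_delta.
apply: differentiable_sum => j; apply: differentiableZl.
by have [] := C_diff (CG j).
Qed.

Lemma CV_D G v : CV G -> CV (fun x => 'D_v G x).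
Proof.
move=> CG j.
have [_ /(_ v) [g [Cg Hg]]] := C_diff (CG j).
apply: (Cext Cg) => x.
rewrite derive_mx ?mxE; last exact/diff_derivable/CV_diff.
by rewrite derive_val.
Qed.

Lemma CV_smooth G : CV G -> smooth G.
Proof.
move=> CG.
have H : forall vs : seq U, CV (Defs.iterD vs G).
  by elim => [|v vs IH] //=; apply: CV_D.
move=> vs; split => [x v|x].
  exact/diff_derivable/CV_diff.
exact/differentiable_continuous/CV_diff.
Qed.

End CC.
Arguments Ccst {R n}.
Arguments Ccoord {R n}.

Section Aop.
Variable R : realType.

Definition Aop (g : nat -> R) (j : nat) : R :=
  match j with
  | 0 => 0 | 1 => g 3%N | 2 => g 3%N + g 4%N | 3 => g 1%N - 4%:R * g 2%N | 4 => g 2%N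
  | _ => if odd j then - g j.+1 else g j.-1 end.

Lemma Aop_ge5 g j : (4 < j)%N -> Aop g j = if odd j then - g j.+1 else g j.-1.
Proof. by do 5 (case: j => [|j] //). Qed.

Lemma Aop_lin g h a b j : Aop (fun i => a * g i + b * h i) j = a * Aop g j + b * Aop h j.
Proof.
do 5 (case: j => [|j] /=; first by rewrite ?mulr0 ?addr0 //; ring).
by case: ifP => _; ring.
Qed.

Lemma Aop_lin4 f1 f2 f3 f4 a b c d j :
  Aop (fun i => a * f1 i + b * f2 i + c * f3 i + d * f4 i) j =
  a * Aop f1 j + b * Aop f2 j + c * Aop f3 j + d * Aop f4 j.
Proof.
do 5 (case: j => [|j] /=; first by rewrite ?mulr0 ?addr0 //; ring).
by case: ifP => _; ring.
Qed.

Lemma Aop0 g : Aop g 0 = 0. Proof. by []. Qed.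

Lemma Aop_zero j : Aop (fun _ => 0) j = 0.
Proof.
do 5 (case: j => [|j] /=; first by rewrite ?addr0 ?mulr0 ?subr0).
by case: ifP; rewrite ?oppr0.
Qed.

Lemma oddSn m : odd m.+1 = ~~ odd m. Proof. by []. Qed.

Lemma AA_ge5 h m : (4 < m)%N -> Aop (Aop h) m = - h m.
Proof.
move=> m4; rewrite [Aop (Aop h) m]Aop_ge5 //.
case om: (odd m).
  by rewrite (@Aop_ge5 h m.+1 (ltnW m4)) oddSn om /=.
case: m m4 om => [|p] // p4 op.
rewrite oddSn in op.
have p4' : (4 < p)%N.
  rewrite ltn_neqAle -ltnS p4 andbT; apply/eqP => e; by rewrite -e in op.
rewrite Aop_ge5 //=.
by move: op; case: (odd p).
Qed.

Lemma A4 g j : g 0%N = 0 -> Aop (Aop (Aop (Aop g))) j = - 2%:R * Aop (Aop g) j - g j.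
Proof.
move=> g0.
case: (ltnP 4 j) => j4.
  by rewrite !AA_ge5 // opprK; ring.
case: j j4 => [|[|[|[|[|j]]]]] //= _; rewrite ?g0; ring.
Qed.

Lemma Aop_supp (m : nat) g : (4 < m)%N -> odd m -> (forall i, (m <= i)%N -> g i = 0) ->
  forall i, (m <= i)%N -> Aop g i = 0.
Proof.
move=> m4 om gm i mi; rewrite Aop_ge5 ?(leq_trans m4 mi) //.
case: ifP => oi; first by rewrite gm ?oppr0 // (leq_trans mi).
rewrite gm //; case: i mi oi => [|i] //= mi oi.
rewrite leq_eqVlt in mi; case/orP: mi => [/eqP ei|//].
by move: om; rewrite ei /= oi.
Qed.

Lemma uniq_sol (tau : R) (d : nat -> R) : d 0%N = 0 ->
  (forall j, d j + tau * Aop d j = 0) -> forall j, d j = 0.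
Proof.
move=> d0 H.
have Ed : d = (fun i => (- tau) * Aop d i + 0 * d i).
  by apply/funext => i; rewrite mul0r addr0 mulNr; apply/eqP; rewrite -addr_eq0 H.
have E1 : forall j, Aop d j = - tau * Aop (Aop d) j.
  by move=> j; rewrite {1}Ed Aop_lin mul0r addr0.
have Ed1 : Aop d = (fun i => (- tau) * Aop (Aop d) i + 0 * d i).
  by apply/funext => i; rewrite mul0r addr0 E1.
have E2 : forall j, Aop (Aop d) j = - tau * Aop (Aop (Aop d)) j.
  by move=> j; rewrite {1}Ed1 Aop_lin mul0r addr0.
have Ed2 : Aop (Aop d) = (fun i => (- tau) * Aop (Aop (Aop d)) i + 0 * d i).
  by apply/funext => i; rewrite mul0r addr0 E2.
have E3 : forall j, Aop (Aop (Aop d)) j = - tau * Aop (Aop (Aop (Aop d))) j.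
  by move=> j; rewrite {1}Ed2 Aop_lin mul0r addr0.
move=> j.
have e0 : d j = - tau * Aop d j by rewrite {1}Ed mul0r addr0.
have e1 := E1 j; have e2 := E2 j; have e3 := E3 j; rewrite A4 // in e3.
set a2 := Aop (Aop d) j in e1 e2 e3 *.
set a3 := Aop (Aop (Aop d)) j in e2 e3 *.
have hd : d j = tau ^+ 2 * a2 by rewrite e0 e1; ring.
rewrite hd in e3.
have HH : a2 * (1 + tau ^+ 2) ^+ 2 = a2 - (- tau * (- tau * (- 2%:R * a2 - tau ^+ 2 * a2))).
  by ring.
rewrite e3 in e2.
rewrite -e2 subrr in HH.
move/eqP: HH; rewrite mulf_eq0 => /orP [/eqP a20|]; first by rewrite hd a20 mulr0.
by rewrite expf_eq0 /= gt_eqF // ltr_pwDl // sqr_ge0.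
Qed.

End Aop.

Set Implicit Arguments. Unset Strict Implicit. Unset Printing Implicit Defensive.
Import Order.TTheory GRing.Theory Num.Theory.
Import numFieldNormedType.Exports.
Local Open Scope classical_set_scope.
Local Open Scope ring_scope.

Section Main.
Variable R : realType.
Variable k : nat.
Hypothesis hk : (2 <= k)%N.
Local Notation n := k.*2.+1.
Local Notation U := 'rV[R]_n.

Lemma n4 : (4 < n)%N.
Proof. by rewrite ltnS -(doubleS 1) leq_double. Qed.

Definition qv (x : U) (j : nat) : R := if (0 < j < n)%N then x 0 (inord j) else 0.
Definition tv (x : U) : R := x 0 ord0.
Definition cv (x : U) : R := 1 + tv x ^+ 2.
Definition wv (x : U) (j : nat) : R :=
  (Aop (qv x) j + tv x * qv x j) / cv x +
  (tv x ^+ 2 * (Aop (Aop (Aop (qv x))) j + Aop (qv x) j)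
    - tv x * (Aop (Aop (qv x)) j + qv x j)) / cv x ^+ 2.
Definition Wv (x : U) (j : nat) : R := if j == 0%N then 1 else wv x j.
Definition Nv (x : U) : R := Num.sqrt (\sum_(i < n) Wv x i ^+ 2).
Definition Vf (x : U) : U := \row_(i < n) (Wv x i / Nv x).

Lemma cv_gt0 x : 0 < cv x.
Proof. by rewrite /cv ltr_pwDl // sqr_ge0. Qed.

Lemma qv0 x : qv x 0 = 0. Proof. by []. Qed.

Lemma wv0 x : wv x 0 = 0.
Proof. by rewrite /wv !Aop0 qv0; field; rewrite gt_eqF // cv_gt0. Qed.

Lemma qv_supp x j : (n <= j)%N -> qv x j = 0.
Proof. by move=> nj; rewrite /qv; case: ifP => // /andP [_]; rewrite ltnNge nj. Qed.

Lemma Aq_supp (g : nat -> R) : (forall j, (n <= j)%N -> g j = 0) ->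
  forall j, (n <= j)%N -> Aop g j = 0.
Proof. by apply: Aop_supp; [exact: n4 | rewrite /= odd_double]. Qed.

Lemma wv_supp x j : (n <= j)%N -> wv x j = 0.
Proof.
move=> nj.
have h0 := qv_supp x; have h1 := Aq_supp h0; have h2 := Aq_supp h1; have h3 := Aq_supp h2.
by rewrite /wv h0 ?h1 ?h2 ?h3 // !(mulr0, addr0, subr0, mul0r).
Qed.

Lemma wid x j : wv x j + tv x * Aop (wv x) j = Aop (qv x) j.
Proof.
set t := tv x; set c := cv x; set q := qv x.
have c0 : c != 0 by rewrite gt_eqF // cv_gt0.
have E : wv x = (fun i => (1 / c + t ^+ 2 / c ^+ 2) * Aop q i + (t / c - t / c ^+ 2) * q i
   + (t ^+ 2 / c ^+ 2) * Aop (Aop (Aop q)) i + (- t / c ^+ 2) * Aop (Aop q) i).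
  by apply/funext => i; rewrite /wv -/t -/c -/q; field.
rewrite E Aop_lin4 A4 //.
have ec : c = 1 + t ^+ 2 by [].
rewrite ec; field.
by rewrite -ec.
Qed.


Lemma C_opp f : C f -> C (fun x : U => - f x).
Proof. by move=> Cf; apply: (Cext (Cmul (Ccst (-1)) Cf)) => x; rewrite mulN1r. Qed.

Lemma C_sub f g : C f -> C g -> C (fun x : U => f x - g x).
Proof. by move=> Cf Cg; apply: (Cadd Cf (C_opp Cg)). Qed.

Lemma C_div f g : C f -> C g -> (forall x, g x != 0) -> C (fun x : U => f x / g x).
Proof. by move=> Cf Cg g0; apply: (Cmul Cf (Cinv Cg g0)). Qed.

Lemma C_exp2 f : C f -> C (fun x : U => f x ^+ 2).
Proof. by move=> Cf; apply: (Cext (Cmul Cf Cf)) => x; rewrite expr2. Qed.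

Lemma C_Aop (g : U -> nat -> R) : (forall i, C (fun x => g x i)) ->
  forall j, C (fun x => Aop (g x) j).
Proof.
move=> Cg j; case: (ltnP 4 j) => j4.
  apply: (@Cext _ _ (fun x => if odd j then - g x j.+1 else g x j.-1)).
    by case: (odd j); [exact: C_opp|exact: Cg].
  by move=> x; rewrite Aop_ge5.
case: j j4 => [|[|[|[|[|j]]]]] // _ /=.
- exact: Ccst.
- exact: Cg.
- exact: (Cadd (Cg 3%N) (Cg 4%N)).
- exact: (C_sub (Cg 1%N) (Cmul (Ccst 4%:R) (Cg 2%N))).
- exact: Cg.
Qed.

Lemma C_qv j : C (fun x => qv x j).
Proof. by rewrite /qv; case: (0 < j < n)%N; [exact: Ccoord|exact: Ccst]. Qed.

Lemma C_tv : C tv.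
Proof. exact: Ccoord. Qed.

Lemma C_cv : C cv.
Proof. exact: (Cadd (Ccst 1) (C_exp2 C_tv)). Qed.

Lemma cv_neq0 x : cv x != 0.
Proof. by rewrite gt_eqF // cv_gt0. Qed.

Lemma C_wv j : C (fun x => wv x j).
Proof.
have C1 := C_Aop C_qv.
have C2 := C_Aop C1.
have C3 := C_Aop C2.
apply: Cadd.
  apply: C_div; [|exact: C_cv|exact: cv_neq0].
  exact: (Cadd (C1 j) (Cmul C_tv (C_qv j))).
apply: C_div; [|exact: C_exp2 C_cv|by move=> x; rewrite expf_neq0 // cv_neq0].
apply: C_sub.
  exact: (Cmul (C_exp2 C_tv) (Cadd (C3 j) (C1 j))).
exact: (Cmul C_tv (Cadd (C2 j) (C_qv j))).
Qed.

Lemma C_Wv j : C (fun x => Wv x j).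
Proof. by rewrite /Wv; case: eqP => _; [exact: Ccst|exact: C_wv]. Qed.

Lemma C_sum (F : 'I_n -> U -> R) : (forall i, C (F i)) -> C (fun x => \sum_(i < n) F i x).
Proof.
move=> CF; rewrite -fct_sumE.
elim/big_ind: _ => //.
- exact: (Cext (Ccst 0)).
- by move=> f g Cf Cg; apply: (Cext (Cadd Cf Cg)).
Qed.

Lemma S_ge1 x : 1 <= \sum_(i < n) Wv x i ^+ 2.
Proof.
rewrite (bigD1 ord0) //= /Wv eqxx expr1n lerDl.
by apply: sumr_ge0 => i _; rewrite sqr_ge0.
Qed.

Lemma Nv_gt0 x : 0 < Nv x.
Proof. by rewrite sqrtr_gt0 (lt_le_trans ltr01 (S_ge1 x)). Qed.

Lemma Nv_sqr x : Nv x ^+ 2 = \sum_(i < n) Wv x i ^+ 2.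
Proof. by rewrite sqr_sqrtr // (le_trans ler01 (S_ge1 x)). Qed.

Lemma C_Nv : C Nv.
Proof.
apply: Csqrt; first by apply: C_sum => i; apply: C_exp2; apply: C_Wv.
by move=> x; rewrite (lt_le_trans ltr01 (S_ge1 x)).
Qed.

Lemma CV_Vf : CV Vf.
Proof.
move=> j; apply: (Cext (C_div (C_Wv j) C_Nv _)) => [x|x].
  by rewrite gt_eqF // Nv_gt0.
by rewrite mxE.
Qed.

Lemma Vf_unit : unit_field Vf.
Proof.
move=> x.
have N0 : Nv x ^+ 2 != 0 by rewrite expf_neq0 // gt_eqF // Nv_gt0.
under eq_bigr do rewrite mxE expr_div_n.
by rewrite -mulr_suml -Nv_sqr divff.
Qed.


Lemma derive_const_line (G : U -> U) (x v : U) :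
  (forall h : R, G (h *: v + x) = G x) -> 'D_v G x = 0.
Proof.
move=> H; rewrite /derive; apply: cvg_lim => //.
apply: cvg_near_cst; near=> h; by rewrite /= H subrr scaler0.
Unshelve. all: by end_near. Qed.

Lemma wv_out x j : ~~ (0 < j < n)%N -> wv x j = 0.
Proof.
case: j => [|j]; first by rewrite wv0.
by rewrite /= -leqNgt => nj; rewrite wv_supp.
Qed.

Lemma Vf_entry x (i : 'I_n) : Vf x 0 i = Wv x i / Nv x.
Proof. by rewrite mxE. Qed.

Lemma qv_line x h : qv (h *: Vf x + x) = fun j => 1 * qv x j + (h / Nv x) * wv x j.
Proof.
apply/funext => j; rewrite /qv; case H: (0 < j < n)%N.
  case/andP: H => j0 jn.
  rewrite !mxE inordK // /Wv; case: eqP => [e|_]; first by rewrite e in j0.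
  by rewrite mul1r addrC mulrA mulrAC.
by rewrite wv_out ?H // !(mulr0, addr0).
Qed.

Lemma tv_line x h : tv (h *: Vf x + x) = h / Nv x + tv x.
Proof. by rewrite /tv !mxE /Wv /= mul1r. Qed.

Lemma wv_line x h : wv (h *: Vf x + x) = wv x.
Proof.
set y := h *: Vf x + x; set s := h / Nv x.
pose d := fun j => 1 * wv y j + (-1) * wv x j.
have d0 : d 0%N = 0 by rewrite /d !wv0 !mulr0 addr0.
have Hd : forall j, d j + tv y * Aop d j = 0.
  move=> j; rewrite /d Aop_lin.
  have e1 := wid y j; have e2 := wid x j.
  rewrite /y qv_line Aop_lin -/y tv_line -/s in e1.
  rewrite /y tv_line -/y -/s.
  have -> : 1 * wv y j + -1 * wv x j + (s + tv x) * (1 * Aop (wv y) j + -1 * Aop (wv x) j)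
     = (wv y j + (s + tv x) * Aop (wv y) j) - (wv x j + tv x * Aop (wv x) j) - s * Aop (wv x) j.
    by ring.
  rewrite e1 e2; ring.
apply/funext => j; have := uniq_sol d0 Hd j.
by rewrite /d mul1r mulN1r => /eqP; rewrite subr_eq0 => /eqP.
Qed.

Lemma Vf_line x h : Vf (h *: Vf x + x) = Vf x.
Proof.
have E : Wv (h *: Vf x + x) = Wv x by apply/funext => j; rewrite /Wv wv_line.
by rewrite {1}/Vf /Nv E.
Qed.

Lemma Vf_fib : line_fibration Vf.
Proof.
split; first exact: CV_smooth CV_Vf.
split; first exact: Vf_unit.
move=> x; exact: derive_const_line (Vf_line x).
Qed.


Lemma is_derive_qv x X j : is_derive x X (fun y => qv y j) (qv X j).
Proof.
rewrite /qv; case: (0 < j < n)%N; first exact: derive_coord.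
exact: is_derive_cst.
Qed.

Lemma is_derive_Aop (g : U -> nat -> R) (dg : nat -> R) x X :
  (forall i, is_derive x X (fun y => g y i) (dg i)) ->
  forall j, is_derive x X (fun y => Aop (g y) j) (Aop dg j).
Proof.
move=> H j; case: (ltnP 4 j) => j4.
  have -> : (fun y => Aop (g y) j) = (fun y => if odd j then - g y j.+1 else g y j.-1).
    by apply/funext => y; rewrite Aop_ge5.
  rewrite Aop_ge5 //; case: (odd j); last exact: H.
  exact: (is_deriveN (H j.+1)).
case: j j4 => [|[|[|[|[|j]]]]] // _ /=.
- exact: is_derive_cst.
- exact: H.
- exact: (is_deriveD (H 3%N) (H 4%N)).
- exact: (is_deriveB (H 1%N) (is_deriveZ 4%:R (H 2%N))).
- exact: H.
Qed.

Lemma wv_derivable x X i : derivable (fun y => wv y i) x X.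
Proof. by have [d _] := C_diff (C_wv i); exact: diff_derivable. Qed.

Lemma key x X j :
  'D_X (fun y => wv y j) x + tv x * Aop (fun i => 'D_X (fun y => wv y i) x) j
   + Aop (wv x) j * X 0 ord0 = Aop (qv X) j.
Proof.
set Dw := fun i => 'D_X (fun y => wv y i) x.
have Hw : forall i, is_derive x X (fun y => wv y i) (Dw i).
  by move=> i; apply: derivableP; apply: wv_derivable.
have Ht : is_derive x X tv (X 0 ord0) by exact: derive_coord.
have H1 : is_derive x X (fun y => wv y j + tv y * Aop (wv y) j)
   (Dw j + (tv x *: Aop Dw j + Aop (wv x) j *: X 0 ord0)).
  exact: (is_deriveD (Hw j) (is_deriveM Ht (is_derive_Aop Hw j))).
have H2 : is_derive x X (fun y => Aop (qv y) j) (Aop (qv X) j).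
  exact: (is_derive_Aop (is_derive_qv x X)).
have E : (fun y => wv y j + tv y * Aop (wv y) j) = (fun y => Aop (qv y) j).
  by apply/funext => y; rewrite wid.
have := derive_val (is_derive := H1); rewrite E (derive_val (is_derive := H2)) => ->.
by rewrite addrA.
Qed.


Lemma deriv_quot (f g : U -> R) x X : derivable f x X -> derivable g x X -> g x != 0 ->
  'D_X (fun y => f y * (g y)^-1) x = f x * (- (g x) ^- 2 * 'D_X g x) + (g x)^-1 * 'D_X f x.
Proof.
move=> df dg g0; have dV := derivableV g0 dg.
change ('D_X (f * (fun y => (g y)^-1)) x = f x * (- (g x) ^- 2 * 'D_X g x) + (g x)^-1 * 'D_X f x).
by rewrite deriveM // deriveV.
Qed.

Lemma wv_quot j : (0 < j < n)%N ->
  (fun y => wv y j) = (fun y => Vf y 0 (inord j) * (Vf y 0 ord0)^-1).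
Proof.
case/andP => j0 jn; apply/funext => y.
have N0 : Nv y != 0 by rewrite gt_eqF // Nv_gt0.
rewrite !Vf_entry inordK // /Wv /=; case: eqP => [e|_]; first by rewrite e in j0.
by field.
Qed.

Lemma Vf0_neq0 y : Vf y 0 ord0 != 0.
Proof. by rewrite Vf_entry /Wv /= mul1r invr_eq0 gt_eqF // Nv_gt0. Qed.

Lemma phi_derivable x X (i : 'I_n) : derivable (fun y => Vf y 0 i) x X.
Proof. by have [d _] := C_diff (CV_Vf i); exact: diff_derivable. Qed.

Lemma Dphi x X (i : 'I_n) : ('D_X Vf x) 0 i = 'D_X (fun y => Vf y 0 i) x.
Proof.
rewrite derive_mx ?mxE //.
exact/diff_derivable/CV_diff/CV_Vf.
Qed.

Lemma Dw_phi x X j : (0 < j < n)%N ->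
  'D_X (fun y => wv y j) x = Vf x 0 (inord j) * (- (Vf x 0 ord0) ^- 2 * ('D_X Vf x) 0 ord0)
     + (Vf x 0 ord0)^-1 * ('D_X Vf x) 0 (inord j).
Proof.
move=> jn; rewrite wv_quot // deriv_quot ?Dphi //; first exact: phi_derivable.
  exact: phi_derivable.
exact: Vf0_neq0.
Qed.

Lemma Dw_out x X j : ~~ (0 < j < n)%N -> 'D_X (fun y => wv y j) x = 0.
Proof.
move=> jn; have -> : (fun y => wv y j) = cst 0 by apply/funext => y; rewrite wv_out.
exact: derive_cst.
Qed.

Lemma Vf_nondeg : nondegenerate_fibration Vf.
Proof.
move=> x X; rewrite /nabla => DV.
have Dwj : forall j, 'D_X (fun y => wv y j) x = 0.
  move=> j; case H: (0 < j < n)%N; last by rewrite Dw_out ?H.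
  by rewrite Dw_phi // DV !mxE !(mulr0, mul0r, addr0).
have Dw : (fun i => 'D_X (fun y => wv y i) x) = (fun _ => 0) by apply/funext => j; apply: Dwj.
have K : forall j, Aop (wv x) j * X 0 ord0 = Aop (qv X) j.
  by move=> j; rewrite -(key x X j) Dwj Dw Aop_zero !(mulr0, add0r).
pose d := fun i => 1 * qv X i + (- X 0 ord0) * wv x i.
have d0 : d 0%N = 0 by rewrite /d qv0 wv0 !mulr0 addr0.
have Ad : Aop d = (fun _ => 0).
  apply/funext => j; rewrite /d Aop_lin -K; ring.
have dz : forall j, d j = 0.
  move=> j; have := A4 j d0; rewrite Ad.
  have Az : Aop (fun _ => 0) = (fun _ => 0 : R) by apply/funext => i; rewrite Aop_zero.
  rewrite !Az /= => /eqP; rewrite mulr0 sub0r eq_sym oppr_eq0 => /eqP //.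
exists (X 0 ord0 * Nv x); apply/rowP => i; rewrite !mxE.
have N0 : Nv x != 0 by rewrite gt_eqF // Nv_gt0.
have [->|i0] := eqVneq i ord0.
  by rewrite /Wv /=; field.
have hi : (0 < i < n)%N by rewrite ltn_ord andbT lt0n; apply: contra i0 => /eqP e; apply/eqP/val_inj.
have := dz i; rewrite /d /qv hi inord_val mul1r mulNr => /eqP; rewrite subr_eq0 => /eqP ->.
rewrite /Wv; case: eqP => [e|_]; first by move: hi; rewrite e.
by field.
Qed.


Lemma qv_origin : qv 0 = (fun _ => 0).
Proof. by apply/funext => j; rewrite /qv; case: ifP => _; rewrite ?mxE. Qed.

Lemma Az : Aop (fun _ => 0) = (fun _ => 0 : R).
Proof. by apply/funext => i; rewrite Aop_zero. Qed.

Lemma tv_origin : tv 0 = 0. Proof. by rewrite /tv mxE. Qed.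

Lemma wv_origin : wv 0 = (fun _ => 0).
Proof.
apply/funext => j; rewrite /wv qv_origin !Az tv_origin /=.
by rewrite !(mulr0, mul0r, addr0, subr0).
Qed.

Lemma Nv_origin : Nv 0 = 1.
Proof.
rewrite /Nv (bigD1 ord0) //= big1 ?addr0 /Wv /= ?expr1n ?sqrtr1 // => i i0.
case: eqP => [e|_]; last by rewrite wv_origin expr0n.
by move: i0; have -> : i = ord0 by apply: val_inj.
Qed.

Lemma Vf_origin (i : 'I_n) : Vf 0 0 i = (i == ord0)%:R.
Proof.
rewrite Vf_entry Nv_origin divr1 /Wv.
case: eqP => [e|ne]; first by have -> : i = ord0 by apply: val_inj.
by rewrite wv_origin; case: eqP => // e; case: ne; rewrite e.
Qed.

Lemma D0 X (j : 'I_n) : j != ord0 -> ('D_X Vf 0) 0 j = Aop (qv X) j.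
Proof.
move=> j0.
have hj : (0 < j < n)%N by rewrite ltn_ord andbT lt0n; apply: contra j0 => /eqP e; apply/eqP/val_inj.
have := key 0 X j; rewrite tv_origin wv_origin Az mul0r addr0 mul0r addr0.
rewrite (Dw_phi 0 X hj) inord_val !Vf_origin (negbTE j0) eqxx mul0r add0r invr1 mul1r.
by [].
Qed.

Lemma qv_e (i : 'I_n) l : qv (e_ R i) l = if (0 < l)%N && (l == i) then 1 else 0.
Proof.
rewrite /qv /e_; case: ifP => [/andP [l0 ln]|H].
  rewrite mxE eqxx l0 /=.
  have -> : (inord l == i) = (l == i) by rewrite -(inj_eq val_inj) /= inordK.
  by case: (l == i).
case: ifP => // /andP [l0 /eqP li]; move: H; rewrite l0 li ltn_ord //.
Qed.

Lemma A_e1 l : Aop (fun m => if (0 < m)%N && (m == 1%N) then 1 else 0) l = if l == 3%N then 1 else 0 :> R.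
Proof.
do 5 (case: l => [|l] /=; first by rewrite ?(subr0, addr0, mulr0, oppr0)).
by case: ifP; rewrite ?oppr0.
Qed.


Definition one : 'I_n := inord 1.

Lemma oneE : (one : nat) = 1%N.
Proof. by rewrite /one inordK // (@ltn_trans 4 1 n erefl n4). Qed.

Lemma one_neq0 : one != ord0.
Proof. by apply/eqP => /(congr1 val); rewrite /= oneE. Qed.

Lemma Dn (i j : 'I_n) : j != ord0 -> nabla Vf 0 (e_ R i) 0 j = Aop (qv (e_ R i)) j.
Proof. by rewrite /nabla; exact: D0. Qed.

Lemma dalpha0 (a b : 'I_n) : a != ord0 -> b != ord0 ->
  dalpha Vf 0 a b = Aop (qv (e_ R a)) b - Aop (qv (e_ R b)) a.
Proof. by move=> a0 b0; rewrite /dalpha; congr (_ - _); apply: Dn. Qed.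

Lemma dalpha_one (j : 'I_n) : j != ord0 ->
  dalpha Vf 0 one j = 0 /\ dalpha Vf 0 j one = 0.
Proof.
move=> j0.
have E1 : Aop (qv (e_ R one)) j = if (j == 3%N :> nat) then 1 else 0.
  have -> : qv (e_ R one) = (fun m => if (0 < m)%N && (m == 1%N) then 1 else 0).
    by apply/funext => l; rewrite qv_e oneE.
  exact: A_e1.
have E2 : Aop (qv (e_ R j)) one = if (j == 3%N :> nat) then 1 else 0.
  rewrite oneE.
  have -> : Aop (qv (e_ R j)) 1 = qv (e_ R j) 3 by [].
  by rewrite qv_e /= eq_sym.
split.
  by rewrite (dalpha0 one_neq0 j0) E1 E2 subrr.
by rewrite (dalpha0 j0 one_neq0) E1 E2 subrr.
Qed.

Lemma not_contact : ~ orth_contact Vf.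
Proof.
move/(_ 0) => /negP; apply; apply/eqP.
rewrite /alpha_wedge_dalpha_pow big1 // => s _.
rewrite /alpha Vf_origin.
case: eqP => [s0|s0]; last by rewrite /= mulr0n mulr0 mul0r.
set j0 := (s^-1)%g one.
have sj0 : s j0 = one by rewrite /j0 permKV.
have j00 : j0 != ord0.
  by apply/eqP => e; move: sj0; rewrite e s0 => /eqP; rewrite eq_sym (negbTE one_neq0).
have snz : forall i, i != j0 -> s i != one.
  by move=> i; apply: contra => /eqP e; rewrite -sj0 in e; apply/eqP; exact: (perm_inj e).
have sz : forall i, i != ord0 -> s i != ord0.
  by move=> i; apply: contra => /eqP e; rewrite -s0 in e; apply/eqP; exact: (perm_inj e).
have p0 : (0 < j0)%N by rewrite lt0n; apply: contra j00 => /eqP e; apply/eqP/val_inj.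
have pn := ltn_ord j0.
have E := odd_double_half (j0.-1).
set m := (j0.-1)./2 in E.
have mk : (m < k)%N by lia.
apply/eqP; rewrite mulf_eq0; apply/orP; right.
rewrite (bigD1 (Ordinal mk)) //= mulf_eq0; apply/orP; left.
case oj: (odd j0.-1) in E.
-
  have e2 : j0 = inord m.*2.+2 :> 'I_n by apply: val_inj; rewrite /= inordK; lia.
  have nz : inord m.*2.+1 != ord0 :> 'I_n.
    by apply/eqP => /(congr1 (@nat_of_ord _)); rewrite /= inordK; lia.
  by rewrite -e2 sj0; case: (dalpha_one (sz _ nz)) => _ /eqP.
- have e1 : j0 = inord m.*2.+1 :> 'I_n by apply: val_inj; rewrite /= inordK; lia.
  have nz : inord m.*2.+2 != ord0 :> 'I_n.
    by apply/eqP => /(congr1 (@nat_of_ord _)); rewrite /= inordK; lia.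
  by rewrite -e1 sj0; case: (dalpha_one (sz _ nz)) => /eqP.
Qed.

End Main.

End Dev.

Import Order.TTheory GRing.Theory Num.Theory.
Local Open Scope ring_scope.

Theorem theorem1p6 (R : realType) (k : nat) (hk : (2 <= k)%N) :
  exists V : 'rV[R]_(k.*2.+1) -> 'rV[R]_(k.*2.+1),
    line_fibration V /\ nondegenerate_fibration V /\ ~ orth_contact V.
Proof.
exists (@Dev.Vf R k).
split; first exact: Dev.Vf_fib.
split; first exact: Dev.Vf_nondeg.
exact: Dev.not_contact.
Qed.
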